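(* Let $N = n+1\ge 4$ be even, let $\boldsymbol{\lambda} = (\lambda_1,\dots,\lambda_N) \in \Lambda_N$, let $\mathbf{v}_0 = \mathbf{0}$, $\mathbf{v}_i = \lambda_i(\mathbf{e}_{i-1}-\mathbf{e}_i)$ for $1\le i\le N$, $V_N=\{\mathbf{v}_0,\dots,\mathbf{v}_N\}$, and $\Delta_+(G^{\mathbf{0}}_{\boldsymbol{\lambda}}) = \{\operatorname{conv}(V_N \setminus \{\mathbf{v}_i\}) \mid \lambda_i = \lambda_1\}$. Lift each simplex $T$ of $\Delta_+(G^{\mathbf{0}}_{\boldsymbol{\lambda}})$ to $\Omega_\omega(T) = \operatorname{conv}\{(\mathbf{a},\omega(\mathbf{a})) \mid \mathbf{a} \text{ a vertex of } T\} \subset \mathbb{R}^{n+1}$. If $\lambda_1 = 1$, then the upward-pointing inner normal vectors (with last coordinate $1$) of the simplices in $\Omega_\omega(\Delta_+(G^{\mathbf{0}}_{\boldsymbol{\lambda}}))$ are $\mathbf{x}_{\boldsymbol{\lambda}} = (x_1,\dots,x_{n+1})$ where $x_i = \sum_{j=1}^i \lambda_j$ for $1 \le i < n+1$ and $x_{n+1} = 1$, together with \[ \mathbf{y}_{\boldsymbol{\lambda},j} = \mathbf{x}_{\boldsymbol{\lambda}} + \sum_{k=1}^{j-1}\mathbf{e}_k \] for each $j > 1$ such that $\lambda_j = 1$ (here $\mathbf{e}_k$ denotes the standard basis vectors of $\mathbb{R}^{n+1}$). If $\lambda_1 = -1$, then the upward-pointing inner normal vectors are $\mathbf{x}_{\boldsymbol{\lambda}}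 = \sigma(\mathbf{x}_{-\boldsymbol{\lambda}})$ and $\mathbf{y}_{\boldsymbol{\lambda},j} = \sigma(\mathbf{y}_{-\boldsymbol{\lambda},j})$ for each $j>1$ with $\lambda_j < 0$, where $\sigma:\mathbb{R}^{n+1}\to\mathbb{R}^{n+1}$ is the map negating the first $n$ coordinates.
   Context: $\mathbf{e}_1,\dots,\mathbf{e}_n$ is the standard basis of $\mathbb{R}^n$ with the convention $\mathbf{e}_0 = \mathbf{e}_N = \mathbf{0}$. For even $N$, $\Lambda_N = \{(\lambda_1,\dots,\lambda_N) \in \{-1,1\}^N \mid \sum_i \lambda_i = 0\}$. The cycle graph $C_N$ has vertices $0,\dots,N-1$ and edges $\{0,1\},\{1,2\},\dots,\{N-2,N-1\},\{N-1,0\}$; $S_{C_N} = \{\mathbf{0}\} \cup \{\mathbf{e}_i - \mathbf{e}_j \mid \{i,j\} \text{ an edge of } C_N\}$. The height function $\omega: S_{C_N}\to\mathbb{Z}$ is $\omega(\mathbf{0}) = 0$, $\omega(\pm\mathbf{e}_1) = 2$, and $\omega(\mathbf{a}) = 1$ otherwise. A vector in $\mathbb{R}^{n+1}$ is upward-pointing if its last coordinate is positive. *)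

(* Defs.v *)
(* Vectors of R^m are row vectors 'rV[R]_m; the paper's
   1-based coordinate i corresponds to the 0-based ordinal i-1. *)
From HB Require Import structures.
From mathcomp Require Import all_boot all_order all_algebra.
Unset Printing Implicit Defensive.
Import Order.TTheory GRing.Theory Num.Theory.
Local Open Scope ring_scope.

(* Lambda_N: sign vectors (lambda_1,...,lambda_N) in {-1,1}^N with zero sum.
   A sign vector is given as lam : nat -> int, only lam 1, ..., lam N matter. *)
Definition in_Lambda (N : nat) (lam : nat -> int) : Prop :=
  (forall i, (1 <= i <= N)%N -> lam i = 1 \/ lam i = -1) /\
  \sum_(1 <= i < N.+1) lam i = 0.

(* standard basis vector e_k of R^m (1-based);  e_k = 0 when k = 0 or k > m,
   in particular e_0 = e_N = 0 for m = n = N - 1 *)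
Definition ebasis (R : realFieldType) (m k : nat) : 'rV[R]_m :=
  \row_(j < m) (if j.+1 == k then 1 else 0).

Definition vv (R : realFieldType) (n : nat) (lam : nat -> int) (k : nat) : 'rV[R]_n :=
  if k is k'.+1 then (lam k)%:~R *: (ebasis R n k' - ebasis R n k) else 0.

(* S_{C_N} = {0} U {e_i - e_j | {i,j} edge of C_N}  (with e_0 = 0) *)
Definition S_CN (R : realFieldType) (n : nat) (a : 'rV[R]_n) : Prop :=
  a = 0 \/ exists i j : nat, (i < n.+1)%N /\ (j < n.+1)%N /\
     (j == (i.+1 %% n.+1)%N \/ i == (j.+1 %% n.+1)%N) /\ a = ebasis R n i - ebasis R n j.

(* height function omega on S_{C_N}: omega 0 = 0, omega (+-e_1) = 2, 1 otherwise.
   (It is only ever evaluated on elements of S_{C_N}, namely on the v_k.) *)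
Definition omega (R : realFieldType) (n : nat) (a : 'rV[R]_n) : R :=
  if a == 0 then 0
  else if (a == ebasis R n 1) || (a == - ebasis R n 1) then 2 else 1.

Definition liftw (R : realFieldType) (n : nat) (a : 'rV[R]_n) : 'rV[R]_n.+1 :=
  \row_(j < n.+1) (if unlift ord_max j is Some k then a 0 k else omega R n a).

Definition dotp (R : realFieldType) (m : nat) (u w : 'rV[R]_m) : R :=
  \sum_(j < m) u 0 j * w 0 j.

Definition up_normal (R : realFieldType) (m : nat) (P : seq 'rV[R]_m.+1)
    (u : 'rV[R]_m.+1) : Prop :=
  u 0 ord_max = 1 /\ forall p q, p \in P -> q \in P -> dotp R m.+1 (p - q) u = 0.

(* vertices of Omega_omega(conv(V_N \ {v_i})), N = n+1 *)
Definition lifted_simplex (R : realFieldType) (n : nat) (lam : nat -> int) (i : nat)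
    : seq 'rV[R]_n.+1 :=
  [seq liftw R n (vv R n lam k) | k <- iota 0 n.+2 & k != i].

Definition Delta_plus_normal (R : realFieldType) (n : nat) (lam : nat -> int)
    (u : 'rV[R]_n.+1) : Prop :=
  exists i, (1 <= i <= n.+1)%N /\ lam i = lam 1%N /\
    up_normal R n (lifted_simplex R n lam i) u.

Definition xvec (R : realFieldType) (n : nat) (lam : nat -> int) : 'rV[R]_n.+1 :=
  \row_(j < n.+1) (if (j < n)%N then (\sum_(1 <= k < j.+2) lam k)%:~R else 1).

Definition yvec (R : realFieldType) (n : nat) (lam : nat -> int) (j : nat) : 'rV[R]_n.+1 :=
  xvec R n lam + \sum_(1 <= k < j) ebasis R n.+1 k.

Definition sigma (R : realFieldType) (n : nat) (u : 'rV[R]_n.+1) : 'rV[R]_n.+1 :=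
  \row_(j < n.+1) (if (j < n)%N then - u 0 j else u 0 j).

(* Main.v *)
Require Import Defs.
From mathcomp Require Import all_boot all_order all_algebra.
From mathcomp Require Import zify ring lra.
Import Order.TTheory GRing.Theory Num.Theory.
Local Open Scope ring_scope.

Section Aux.
Variables (R : realFieldType) (n : nat) (lam : nat -> int).
Hypothesis hn : (3 <= n)%N.
Hypothesis hpm : forall i, (1 <= i <= n.+1)%N -> lam i = 1 \/ lam i = -1.
Hypothesis hsum : \sum_(1 <= i < n.+2) lam i = 0.

Definition DD (u : 'rV[R]_n.+1) (a : 'rV[R]_n) : R :=
  \sum_(j < n) a 0 j * u 0 (widen_ord (leqnSn n) j).

Lemma unlift_widen (j : 'I_n) : unlift ord_max (widen_ord (leqnSn n) j) = Some j.
Proof.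
have -> : widen_ord (leqnSn n) j = lift ord_max j by apply: val_inj; rewrite [RHS]lift_max.
by rewrite liftK.
Qed.

Lemma dotp_liftw u a :
  dotp R n.+1 (liftw R n a) u = DD u a + omega R n a * u 0 ord_max.
Proof.
rewrite /dotp big_ord_recr /=; congr (_ + _).
  by apply: eq_bigr => j _; rewrite mxE unlift_widen.
by rewrite mxE unlift_none.
Qed.

Lemma DD_lin u c a b : DD u (c *: (a - b)) = c * (DD u a - DD u b).
Proof.
rewrite /DD -sumrB mulr_sumr; apply: eq_bigr => j _; rewrite !mxE; ring.
Qed.

Lemma DD_ej u (j : 'I_n) : DD u (ebasis R n j.+1) = u 0 (widen_ord (leqnSn n) j).
Proof.
rewrite /DD (bigD1 j) //= big1 ?addr0; first by rewrite mxE eqxx mul1r.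
move=> k hk; rewrite mxE eqSS.
by rewrite (_ : (k == j :> nat) = false) ?mul0r //; apply/negbTE.
Qed.

Lemma DD_e0 u : DD u (ebasis R n 0) = 0.
Proof. by rewrite /DD big1 // => j _; rewrite mxE mul0r. Qed.

Lemma DD_eN u : DD u (ebasis R n n.+1) = 0.
Proof.
rewrite /DD big1 // => j _; rewrite mxE eqSS.
by rewrite (_ : (j == n :> nat) = false) ?mul0r //; apply/negbTE; rewrite neq_ltn ltn_ord.
Qed.

Definition hh (k : nat) : R := if k == 1%N then 2 else 1.

Lemma omega_one (a : 'rV[R]_n) (j : 'I_n) :
  a 0 j != 0 -> (j != 0 :> nat) -> omega R n a = 1.
Proof.
move=> haj hj; rewrite /omega.
have e1j : ebasis R n 1 0 j = 0 by rewrite mxE eqSS (negbTE hj).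
have -> : (a == 0) = false by apply/negbTE; apply: contra haj => /eqP ->; rewrite mxE.
have -> : (a == ebasis R n 1) = false.
  by apply/negbTE; apply: contra haj => /eqP ->; rewrite e1j.
have -> : (a == - ebasis R n 1) = false.
  by apply/negbTE; apply: contra haj => /eqP ->; rewrite mxE e1j oppr0.
by [].
Qed.

Lemma lam_nz k : (1 <= k <= n.+1)%N -> ((lam k)%:~R : R) != 0.
Proof. by move=> /hpm [->|->]; rewrite ?intrN; rewrite ?oppr_eq0 oner_eq0. Qed.

Lemma ebasis0 : ebasis R n 0 = 0.
Proof. by apply/matrixP => i j; rewrite !mxE. Qed.

Lemma omega_vv k : (1 <= k <= n.+1)%N -> omega R n (vv R n lam k) = hh k.
Proof.
move=> hk; have lnz := @lam_nz k hk.
case: k hk lnz => [//|[|k]] hk lnz.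
  rewrite /vv ebasis0 sub0r /hh /=.
  have e1nz : ebasis R n 1 != 0.
    apply/eqP => /matrixP /(_ 0 (Ordinal (leq_trans (isT : (0 < 3)%N) hn))).
    by rewrite !mxE /= => /eqP; rewrite oner_eq0.
  have [->|->] := hpm _ hk; rewrite ?mulr1z ?mulrN1z ?scaleN1r ?scale1r ?opprK.
  - rewrite /omega oppr_eq0 (negbTE e1nz) eqxx /= ?orbT //.
  - rewrite /omega (negbTE e1nz) eqxx //.
rewrite /hh /=.
case: (ltnP k.+2 n.+1) => hkn.
  apply: (@omega_one _ (Ordinal (hkn : (k.+1 < n)%N))) => //.
  rewrite /vv !mxE /= eqxx.
  rewrite (_ : (k.+2 == k.+1) = false); last by apply/negbTE/eqP; lia.
  by rewrite sub0r mulrN1 oppr_eq0.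
have hk' : k.+2 = n.+1 by lia.
have hj : (n.-1 < n)%N by lia.
apply: (@omega_one _ (Ordinal hj)); last by rewrite /=; lia.
rewrite /vv !mxE /=.
rewrite (_ : (n.-1.+1 == k.+1) = true); last by apply/eqP; lia.
rewrite (_ : (n.-1.+1 == k.+2) = false); last by apply/negbTE/eqP; lia.
by rewrite subr0 mulr1.
Qed.


Lemma DD_zero u : DD u 0 = 0.
Proof. by rewrite /DD big1 // => j _; rewrite mxE mul0r. Qed.

Lemma dotp_vv0 u : dotp R n.+1 (liftw R n (vv R n lam 0)) u = 0.
Proof.
by rewrite dotp_liftw /= DD_zero /omega eqxx mul0r addr0.
Qed.

Definition UU u m := DD u (ebasis R n m).

Lemma dotp_vv u k : (1 <= k <= n.+1)%N ->
  dotp R n.+1 (liftw R n (vv R n lam k)) u =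
  (lam k)%:~R * (UU u k.-1 - UU u k) + hh k * u 0 ord_max.
Proof.
move=> hk; rewrite dotp_liftw omega_vv //.
case: k hk => [//|k] hk.
by rewrite /= DD_lin.
Qed.

Definition TT (m : nat) : R := \sum_(1 <= k < m.+1) (lam k)%:~R * hh k.
Definition SS (m : nat) : R := (\sum_(1 <= k < m.+1) lam k)%:~R.
Definition WW (i : nat) : 'rV[R]_n.+1 :=
  \row_(j < n.+1) (if (j < n)%N then TT j.+1 - (lam 1%N)%:~R * (if (i <= j.+1)%N then 1 else 0) else 1).

Lemma TT_S k : TT k.+1 = TT k + (lam k.+1)%:~R * hh k.+1.
Proof. by rewrite /TT big_nat_recr. Qed.

Lemma TT0 : TT 0 = 0.
Proof. by rewrite /TT big_geq. Qed.

Lemma TT_SS m : (1 <= m)%N -> TT m = SS m + (lam 1%N)%:~R.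
Proof.
elim: m => [//|m IH] _.
case: m IH => [|m] IH.
  by rewrite TT_S TT0 /SS big_nat1 /hh /=; ring.
rewrite TT_S IH // /SS (big_nat_recr m.+2) //= intrD /hh /=; ring.
Qed.

Lemma TT_N : TT n.+1 = (lam 1%N)%:~R.
Proof. by rewrite TT_SS // /SS hsum add0r. Qed.

Lemma UU_coord (u : 'rV[R]_n.+1) m (hm : (m < n)%N) :
  UU u m.+1 = u 0 (widen_ord (leqnSn n) (Ordinal hm)).
Proof. exact: (DD_ej u (Ordinal hm)). Qed.

Lemma UU0 (u : 'rV[R]_n.+1) : UU u 0 = 0.
Proof. exact: DD_e0. Qed.

Lemma UUN (u : 'rV[R]_n.+1) : UU u n.+1 = 0.
Proof. exact: DD_eN. Qed.

Lemma lam_sq k : (1 <= k <= n.+1)%N -> ((lam k)%:~R : R) * (lam k)%:~R = 1.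
Proof. by move=> /hpm [->|->]; rewrite ?mulr1z ?mulrN1z ?mulr1 ?mulrNN ?mulr1. Qed.

Lemma step_iff (u : 'rV[R]_n.+1) k : u 0 ord_max = 1 -> (1 <= k <= n.+1)%N ->
  (dotp R n.+1 (liftw R n (vv R n lam k)) u = 0 <->
   UU u k = UU u k.-1 + (lam k)%:~R * hh k).
Proof.
move=> hu hk; rewrite dotp_vv // hu mulr1.
have hsq := @lam_sq k hk.
set l := ((lam k)%:~R : R) in hsq *.
split=> h.
  have : l * (l * (UU u k.-1 - UU u k) + hh k) = 0 by rewrite h mulr0.
  rewrite mulrDr mulrA hsq mul1r => h2.
  lra.
rewrite h; rewrite opprD addrA subrr sub0r mulrN mulrA hsq mul1r; lra.
Qed.

Lemma core_iff (u : 'rV[R]_n.+1) i : (1 <= i <= n.+1)%N ->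
  ((u 0 ord_max = 1 /\ forall k, (1 <= k <= n.+1)%N -> k != i ->
      UU u k = UU u k.-1 + (lam k)%:~R * hh k) <-> u = WW i).
Proof.
move=> hi; split.
  move=> [hu hk].
  set c := UU u i - TT i.
  have claim : forall m, (m <= n.+1)%N -> UU u m = TT m + (if (i <= m)%N then c else 0).
    elim=> [|m IH] hm.
      rewrite UU0 TT0 (_ : (i <= 0)%N = false) ?addr0 //; lia.
    case: (eqVneq m.+1 i) => hmi.
      by rewrite hmi leqnn /c; ring.
    have hm1 : (1 <= m.+1 <= n.+1)%N by rewrite hm.
    rewrite (hk m.+1 hm1 hmi) /=.
    rewrite IH; last by lia.
    rewrite TT_S (_ : (i <= m.+1)%N = (i <= m)%N); last first.
      by apply/idP/idP => h; lia.
    by rewrite addrAC.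
  have hc : c = - (lam 1%N)%:~R.
    have := claim n.+1 (leqnn _); rewrite UUN TT_N.
    rewrite (_ : (i <= n.+1)%N = true); last by lia.
    move=> h0; lra.
  apply/rowP => j; rewrite mxE.
  case: ifP => hj.
    have hw : widen_ord (leqnSn n) (Ordinal hj) = j by apply: val_inj.
    have := UU_coord u j hj; rewrite hw claim; last by lia.
    rewrite hc => <-.
    by case: ifP => _; ring.
  rewrite -hu; congr (u 0 _); apply: val_inj => /=; move: (ltn_ord j) hj; lia.
move=> ->; split.
  by rewrite mxE ltnn.
have claim : forall m, (m <= n.+1)%N ->
    UU (WW i) m = TT m - (lam 1%N)%:~R * (if (i <= m)%N then 1 else 0).
  case=> [|m] hm.
    rewrite UU0 TT0 (_ : (i <= 0)%N = false); first by ring. lia.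
  case: (ltnP m n) => hmn.
    by rewrite UU_coord mxE /= hmn.
  have -> : m = n by lia.
  rewrite UUN TT_N (_ : (i <= n.+1)%N = true); first by ring. lia.
move=> k hk hki.
rewrite !claim; try lia.
case: k hk hki => [//|k] hk hki /=.
rewrite TT_S (_ : (i <= k.+1)%N = (i <= k)%N); last by apply/idP/idP => h; lia.
ring.
Qed.

Lemma dotpB (m : nat) (p q w : 'rV[R]_m) : dotp R m (p - q) w = dotp R m p w - dotp R m q w.
Proof. by rewrite /dotp -sumrB; apply: eq_bigr => j _; rewrite !mxE mulrBl. Qed.

Lemma upn_iff (u : 'rV[R]_n.+1) i : (1 <= i <= n.+1)%N ->
  (up_normal R n (lifted_simplex R n lam i) u <->
   (u 0 ord_max = 1 /\ forall k, (1 <= k <= n.+1)%N -> k != i ->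
      dotp R n.+1 (liftw R n (vv R n lam k)) u = 0)).
Proof.
move=> hi; split.
  move=> [hu H]; split => // k hk hki.
  have := H (liftw R n (vv R n lam k)) (liftw R n (vv R n lam 0)).
  rewrite dotpB dotp_vv0 subr0; apply.
    by apply/mapP; exists k => //; rewrite mem_filter mem_iota hki /=; lia.
  by apply/mapP; exists 0%N => //; rewrite mem_filter mem_iota /=; apply/eqP; lia.
move=> [hu H]; split => // p q.
have hz : forall p, p \in lifted_simplex R n lam i -> dotp R n.+1 p u = 0.
  move=> p' /mapP [k]; rewrite mem_filter mem_iota => /andP [hki hk] ->.
  case: k hki hk => [|k] hki hk; first exact: dotp_vv0.
  by apply: H => //; lia.
by move=> /hz hp /hz hq; rewrite dotpB hp hq subrr.
Qed.

Lemma upn_WW (u : 'rV[R]_n.+1) i : (1 <= i <= n.+1)%N ->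
  (up_normal R n (lifted_simplex R n lam i) u <-> u = WW i).
Proof.
move=> hi; rewrite upn_iff // -core_iff //.
split=> [[hu H]|[hu H]]; split => // k hk hki.
  by rewrite -step_iff //; apply: H.
by rewrite step_iff //; apply: H.
Qed.

Lemma sum_e_coord (m : nat) (l : 'I_m) j :
  (\sum_(1 <= k < j) ebasis R m k) 0 l = if (l.+1 < j)%N then 1 else 0.
Proof.
rewrite summxE; elim: j => [|j IH]; first by rewrite big_geq.
case: j IH => [|j] IH; first by rewrite big_geq.
rewrite big_nat_recr // IH mxE.
case: (ltngtP l.+1 j.+1) => h.
- have -> : (l.+1 < j.+2)%N = true by lia.
  by rewrite /= addr0.
- have -> : (l.+1 < j.+2)%N = false by lia.
  by rewrite /= addr0.
- by rewrite h ltnSn /= add0r.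
Qed.

Lemma WW_coord i (l : 'I_n.+1) : (l < n)%N ->
  WW i 0 l = SS l.+1 + (lam 1%N)%:~R - (lam 1%N)%:~R * (if (i <= l.+1)%N then 1 else 0).
Proof. by move=> hl; rewrite mxE hl TT_SS. Qed.

Lemma WW_last i (l : 'I_n.+1) : ~~ (l < n)%N -> WW i 0 l = 1.
Proof. by move=> hl; rewrite mxE (negbTE hl). Qed.

Lemma WW1_x : WW 1 = xvec R n lam.
Proof.
apply/rowP => l; case: (ltnP l n) => hl.
  by rewrite WW_coord // mxE hl /=; rewrite /SS; ring.
by rewrite WW_last ?mxE; rewrite -?leqNgt // ltnNge hl.
Qed.

Lemma WWj_y j : lam 1%N = 1 -> (1 < j <= n.+1)%N -> WW j = yvec R n lam j.
Proof.
move=> h1 hj; apply/rowP => l; rewrite /yvec [RHS]mxE sum_e_coord [xvec R n lam 0 l]mxE.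
case: (ltnP l n) => hl.
  rewrite WW_coord // h1 /SS.
  case: (leqP j l.+1) => h; rewrite ?(_ : (l.+1 < j)%N = false) ?(_ : (l.+1 < j)%N = true) //; try lia; ring.
rewrite WW_last -?leqNgt // (_ : (l.+1 < j)%N = false); last by lia.
by rewrite addr0.
Qed.

Lemma WW1_sx : WW 1 = sigma R n (xvec R n (fun k => - lam k)).
Proof.
apply/rowP => l; case: (ltnP l n) => hl.
  by rewrite WW_coord // !mxE hl /= sumrN intrN opprK /SS; ring.
by rewrite WW_last ?mxE ?ltnNge ?hl //= ?mxE ?ltnNge ?hl.
Qed.

Lemma WWj_sy j : lam 1%N = -1 -> (1 < j <= n.+1)%N ->
  WW j = sigma R n (yvec R n (fun k => - lam k) j).
Proof.
move=> h1 hj; apply/rowP => l; rewrite [RHS]mxE /yvec.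
case: (ltnP l n) => hl.
  rewrite WW_coord // h1 mxE sum_e_coord mxE hl sumrN intrN /SS ?intrN ?mulr1z.
  case: (leqP j l.+1) => h; rewrite ?(_ : (l.+1 < j)%N = false) ?(_ : (l.+1 < j)%N = true) //; try lia; ring.
rewrite WW_last -?leqNgt // [RHS]mxE sum_e_coord mxE ltnNge hl /=.
have -> : (l.+1 < j)%N = false by lia.
by rewrite addr0.
Qed.

Lemma main_aux :
  (lam 1%N = 1 ->
     forall u : 'rV[R]_n.+1, Delta_plus_normal R n lam u <->
       (u = xvec R n lam \/
        exists j : nat, (1 < j <= n.+1)%N /\ lam j = 1 /\ u = yvec R n lam j)) /\
  (lam 1%N = -1 ->
     forall u : 'rV[R]_n.+1, Delta_plus_normal R n lam u <->
       (u = sigma R n (xvec R n (fun k => - lam k)) \/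
        exists j : nat, (1 < j <= n.+1)%N /\ lam j < 0 /\
          u = sigma R n (yvec R n (fun k => - lam k) j))).
Proof.
split=> h1 u; split.
- move=> [i [hi [hli /(upn_WW u i hi) ->]]].
  case: (eqVneq i 1%N) => hi1; first by left; rewrite hi1 WW1_x.
  have hi' : (1 < i <= n.+1)%N by lia.
  by right; exists i; split => //; split; [rewrite hli h1 | rewrite WWj_y].
- case=> [->|[j [hj [hlj ->]]]].
    exists 1%N; split => //; split => //; apply/(upn_WW _ 1 isT).
    by rewrite WW1_x.
  have hj' : (1 <= j <= n.+1)%N by lia.
  exists j; split => //; split; first by rewrite hlj h1.
  by apply/(upn_WW _ j hj'); rewrite WWj_y.
- move=> [i [hi [hli /(upn_WW u i hi) ->]]].
  case: (eqVneq i 1%N) => hi1; first by left; rewrite hi1 WW1_sx.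
  have hi' : (1 < i <= n.+1)%N by lia.
  by right; exists i; split => //; split; [rewrite hli h1 | rewrite WWj_sy].
- case=> [->|[j [hj [hlj ->]]]].
    exists 1%N; split => //; split => //; apply/(upn_WW _ 1 isT).
    by rewrite WW1_sx.
  have hj' : (1 <= j <= n.+1)%N by lia.
  have hlj' : lam j = -1.
    by case: (hpm _ hj') => // e; rewrite e in hlj.
  exists j; split => //; split; first by rewrite hlj' h1.
  by apply/(upn_WW _ j hj'); rewrite WWj_sy.
Qed.

End Aux.

Theorem lemma5p4 (R : realFieldType) (n : nat) (lam : nat -> int)
    (hN4 : (4 <= n.+1)%N) (hNeven : ~~ odd n.+1) (hlam : in_Lambda n.+1 lam) :
  (lam 1%N = 1 ->
     forall u : 'rV[R]_n.+1, Delta_plus_normal R n lam u <->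
       (u = xvec R n lam \/
        exists j : nat, (1 < j <= n.+1)%N /\ lam j = 1 /\ u = yvec R n lam j)) /\
  (lam 1%N = -1 ->
     forall u : 'rV[R]_n.+1, Delta_plus_normal R n lam u <->
       (u = sigma R n (xvec R n (fun k => - lam k)) \/
        exists j : nat, (1 < j <= n.+1)%N /\ lam j < 0 /\
          u = sigma R n (yvec R n (fun k => - lam k) j))).
Proof.
have hn : (3 <= n)%N by lia.
case: hlam => hpm hsum.
exact: (@main_aux R n lam hn hpm hsum).
Qed.
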